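(* Let $n\ge 5$. Then for every $1\le r\le n$, every subset of $N(W_r)$ of size at least $n-2$ is a resolving set of $L(n)$.
   Context: For $n\ge 5$, $H(n)$ is the graph with vertex set $V_1\cup V_2$, where $V_1=\{v_1,\dots,v_n\}$ and $V_2=\{v_iv_j: 1\le i<j\le n\}$, and $v_r$ is adjacent to $v_iv_j$ iff $r\in\{i,j\}$ (no other edges). $L(n)$ is the line graph of $H(n)$: its vertices are the edges $\{v_r,v_iv_j\}$ of $H(n)$ (with $r\in\{i,j\}$), two being adjacent iff they share an endpoint. For $1\le r\le n$, $W_r$ is the set of vertices of $L(n)$ of the form $\{v_r,v_iv_j\}$ (the edges of $H(n)$ incident to $v_r$); it is a maximal clique of size $n-1$. $N(W_r)$ denotes the set of vertices of $L(n)$ not in $W_r$ that are adjacent to some vertex of $W_r$, i.e. $N(W_r)=\{\{v_k,v_iv_j\}: k\neq r,\ \{i,j\}=\{r,k\}\}$, a set of size $n-1$. $d$ is the shortest-path distance; a set $Q$ of vertices is a resolving set of $G$ if any two distinct vertices $x,y$ satisfy $(d(x,q))_{q\in Q}\neq(d(y,q))_{q\in Q}$. *)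

(* Defs.v *)
From mathcomp Require Import all_boot.
Set Implicit Arguments. Unset Strict Implicit. Unset Printing Implicit Defensive.

Fixpoint reach (V : finType) (adj : rel V) (k : nat) (x y : V) : bool :=
  match k with
  | 0 => x == y
  | k'.+1 => (x == y) || [exists z, adj x z && reach adj k' z y]
  end.

(* Any shortest walk has length < #|V|, so searching k in
   [0, #|V|] is exhaustive; (unreachable pairs would get #|V|.+1, which
   never happens in the connected graph L(n)). *)
Definition dist (V : finType) (adj : rel V) (x y : V) : nat :=
  find (fun k => reach adj k x y) (iota 0 #|V|.+1).

Definition resolving (V : finType) (adj : rel V) (Q : {set V}) : Prop :=
  forall x y : V, (forall q, q \in Q -> dist adj x q = dist adj y q) -> x = y.

(* Vertices of H(n): v_r  (r : 'I_n)  and  v_i v_j  (a 2-subset {i,j}).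
   Edges of H(n): {v_r, v_i v_j} with r \in {i,j}.  Such an edge is encoded
   by the pair (r, {i,j}).  These edges are the vertices of L(n). *)
Definition Lvert (n : nat) :=
  {p : 'I_n * {set 'I_n} | (#|p.2| == 2) && (p.1 \in p.2)}.

(* Two edges of H(n) are adjacent in L(n) iff they are distinct and share an
   endpoint (the same v_r or the same v_i v_j). *)
Definition Ladj (n : nat) : rel (Lvert n) :=
  fun x y => (x != y) &&
    (((val x).1 == (val y).1) || ((val x).2 == (val y).2)).

Definition W (n : nat) (r : 'I_n) : {set Lvert n} :=
  [set x | (val x).1 == r].

Definition NW (n : nat) (r : 'I_n) : {set Lvert n} :=
  [set y | (y \notin W r) && [exists x, (x \in W r) && Ladj x y]].

(* Main.v *)
Require Import Defs.
From mathcomp Require Import all_boot.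
From mathcomp Require Import zify.
Set Implicit Arguments. Unset Strict Implicit.

Definition fstL n (x : Lvert n) : 'I_n := (val x).1.
Definition sndL n (x : Lvert n) : 'I_n :=
  odflt (fstL x) [pick y in (val x).2 :\ fstL x].

Lemma sndL_spec n (x : Lvert n) :
  sndL x != fstL x /\ (val x).2 = [set fstL x; sndL x].
Proof.
case: x => [[a A] /= P]; have /andP [/eqP cA aA] := P; rewrite /sndL /fstL /=.
rewrite (cardsD1 a A) aA add1n in cA; case: cA => /eqP /cards1P [b Hb].
have : b \in A :\ a by rewrite Hb set11.
rewrite in_setD1 => /andP [ba bA].
rewrite Hb; case: pickP => [y|]; last by move/(_ b); rewrite set11.
rewrite in_set1 => /eqP -> /=; split => //.
by rewrite -(setD1K aA) Hb.
Qed.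

Lemma Lval_eq n (x y : Lvert n) :
  (x == y) = (fstL x == fstL y) && (sndL x == sndL y).
Proof.
apply/eqP/andP => [-> //|[/eqP e1 /eqP e2]].
case: (sndL_spec x) (sndL_spec y) => _ ex [_ ey].
apply: val_inj; move: ex ey e1; rewrite /fstL.
case: (val x) => a A; case: (val y) => c C /= -> -> ->.
by rewrite e2.
Qed.

Lemma set2_eqb (T : finType) (a b c d : T) : a != b -> c != d ->
  ([set a; b] == [set c; d]) = ((a == c) && (b == d)) || ((a == d) && (b == c)).
Proof.
move=> ab cd; apply/eqP/idP.
- move=> E.
  have : a \in [set c; d] by rewrite -E set21.
  have : b \in [set c; d] by rewrite -E set22.
  rewrite !in_set2.
  case/orP=> /eqP Eb; case/orP=> /eqP Ea; subst; rewrite ?eqxx ?orbT //;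
  by rewrite eqxx in ab.
- by case/orP => /andP [/eqP -> /eqP ->] //; exact: setUC.
Qed.

Lemma Ladj_coord n (x y : Lvert n) : Ladj x y = (x != y) &&
  ((fstL x == fstL y) || ((fstL x == sndL y) && (sndL x == fstL y))).
Proof.
rewrite /Ladj; case: (sndL_spec x) (sndL_spec y) => nx ex [ny ey].
rewrite ex ey set2_eqb 1?eq_sym // -/(fstL x) -/(fstL y).
by case: (fstL x == fstL y).
Qed.

Definition mkL n (a b : 'I_n) (x0 : Lvert n) : Lvert n :=
  insubd x0 (a, [set a; b]).

Lemma mkL_coord n (a b : 'I_n) x0 : a != b ->
  fstL (mkL a b x0) = a /\ sndL (mkL a b x0) = b.
Proof.
move=> ab.
have P : (#|[set a; b]| == 2) && (a \in [set a; b]) by rewrite cards2 ab set21.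
have V : val (mkL a b x0) = (a, [set a; b]) by rewrite /mkL val_insubd P.
have F : fstL (mkL a b x0) = a by rewrite /fstL V.
split => //.
case: (sndL_spec (mkL a b x0)) => ns E; rewrite V F /= in E; rewrite F in ns.
have : sndL (mkL a b x0) \in [set a; b] by rewrite E set22.
by rewrite in_set2 (negbTE ns) /= => /eqP.
Qed.

Definition gc n (a b c d : 'I_n) : nat :=
  if (a == c) && (b == d) then 0
  else if (a == c) || ((a == d) && (b == c)) then 1
  else if (b == c) || (d == a) then 2 else 3.

Ltac bf := rewrite /gc; repeat (case: eqP => //=; intro; try subst);
  try congruence; try lia; try (intros; intuition congruence).

Lemma gc_tri n (a b c d e f : 'I_n) : a <> b -> c <> d -> e <> f ->
  ~~ ((a == c) && (b == d)) -> (a == c) || ((a == d) && (b == c)) ->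
  gc a b e f <= (gc c d e f).+1.
Proof. move=> ab cd ef; bf. Qed.

Lemma gc_desc n (a b e f : 'I_n) : a <> b -> e <> f -> 0 < gc a b e f ->
  exists c d : 'I_n, [/\ c <> d, ~~ ((a == c) && (b == d)),
     (a == c) || ((a == d) && (b == c)) & gc c d e f = (gc a b e f).-1].
Proof.
move=> ab ef g0.
case: (boolP ((a == e) || ((a == f) && (b == e)))) => H.
  by exists e, f; split => //; move: H g0; bf.
case: (boolP (b == e)) => be.
  by exists b, a; split => //; move: H be g0; bf.
by exists a, e; split => //; move: H be g0; bf.
Qed.

Lemma gc_le3 n (a b c d : 'I_n) : gc a b c d <= 3.
Proof. rewrite /gc; by repeat case: ifP => //=. Qed.

Lemma gc0 n (a b c d : 'I_n) : (gc a b c d == 0) = (a == c) && (b == d).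
Proof. rewrite /gc; by repeat case: ifP => //=. Qed.

Definition gL n (x y : Lvert n) := gc (fstL x) (sndL x) (fstL y) (sndL y).

Lemma reachL n (k : nat) (x y : Lvert n) : reach (@Ladj n) k x y = (gL x y <= k).
Proof.
elim: k x y => [|k IH] x y /=.
  by rewrite leqn0 /gL gc0 Lval_eq.
rewrite Lval_eq -gc0 -/(gL x y).
apply/idP/idP.
  case/orP => [/eqP -> //|/existsP [z /andP [adj]]].
  rewrite IH => lez.
  suff T : gL x y <= (gL z y).+1 by lia.
  move: adj; rewrite Ladj_coord Lval_eq => /andP [ne ad].
  case: (sndL_spec x) (sndL_spec y) (sndL_spec z) => [nx _] [ny _] [nz _].
  apply: gc_tri => //; by apply/eqP; rewrite eq_sym.
case: (boolP (gL x y == 0)) => // g0 le; apply/existsP.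
case: (sndL_spec x) (sndL_spec y) => [/eqP nx _] [/eqP ny _].
have [c [d [cd ne ad e]]] : exists c d : 'I_n, [/\ c <> d, ~~ ((fstL x == c) && (sndL x == d)),
     (fstL x == c) || ((fstL x == d) && (sndL x == c)) & gc c d (fstL y) (sndL y) = (gL x y).-1].
  by apply: gc_desc => //; [apply/nesym | apply/nesym | rewrite lt0n].
have /eqP cd' := cd.
case: (mkL_coord x cd') => F S.
exists (mkL c d x); rewrite Ladj_coord Lval_eq IH /gL F S ne ad /=.
rewrite e -/(gL x y); lia.
Qed.

Lemma find_iota_le m L s : s <= m < s + L ->
  find (fun k => m <= k) (iota s L) = m - s.
Proof.
elim: L s => [|L IH] s; first by lia.
move=> H /=; case: ifP => le; first by lia.
rewrite IH; lia.
Qed.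

Lemma card_L n (x : Lvert n) : 5 <= n -> 3 <= #|{: Lvert n}|.
Proof.
move=> hn.
set a := fstL x.
have inj : {in [set~ a] &, injective (fun k => mkL a k x)}.
  move=> k1 k2; rewrite !in_setC1 => h1 h2 E; rewrite eq_sym in h1; rewrite eq_sym in h2.
  case: (mkL_coord x h1) => _ S1; case: (mkL_coord x h2) => _ S2.
  by rewrite -S1 -S2 E.
have := max_card [set mkL a k x | k in [set~ a]].
rewrite (card_in_imset inj) cardsC1 card_ord. move=> H; apply: (leq_trans _ H); lia.
Qed.

Lemma distL n (x y : Lvert n) : 5 <= n -> dist (@Ladj n) x y = gL x y.
Proof.
move=> hn; rewrite /dist (eq_find (fun k => reachL k x y)).
rewrite find_iota_le ?subn0 // add0n ltnS.
exact: leq_trans (gc_le3 _ _ _ _) (card_L x hn).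
Qed.

Ltac cg := congruence.

Lemma main_comb n (r a b a' b' : 'I_n) (P : pred 'I_n) :
 a <> b -> a' <> b' -> (forall k, P k -> k <> r) ->
 (forall k, P k -> gc a b k r = gc a' b' k r) ->
 (forall u v, u <> r -> v <> r -> u <> v -> P u \/ P v) ->
 (forall p1 p2, exists2 k, P k & k <> p1 /\ k <> p2) ->
 a = a' /\ b = b'.
Proof.
move=> ab ab' Pr H F2 F3.
have G : forall k, P k -> gc a b k r = gc a' b' k r /\ k <> r.
  by move=> k Pk; split; [apply: H | apply: Pr].
case: (a =P r) => ar; case: (a' =P r) => ar'.
- split; first cg.
  case: (b =P b') => [//|bb].
  case: (F2 b b' ltac:(cg) ltac:(cg) ltac:(cg)) => /G; bf.
- case: (F3 a' b') => k /G; bf.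
- case: (F3 a b) => k /G; bf.
- case: (b =P r) => br; case: (b' =P r) => br'.
  + split; last cg.
    case: (a =P a') => [//|aa].
    case: (F2 a a' ltac:(cg) ltac:(cg) ltac:(cg)) => /G; bf.
  + case: (F2 a' b' ltac:(cg) ltac:(cg) ltac:(cg)) => /G; bf.
  + case: (F2 a b ltac:(cg) ltac:(cg) ltac:(cg)) => /G; bf.
  + case: (a =P a') => aa.
      split => //.
      case: (b =P b') => [//|bb].
      case: (F2 b b' ltac:(cg) ltac:(cg) ltac:(cg)) => /G; bf.
    case: (F2 a a' ltac:(cg) ltac:(cg) ltac:(cg)) => /G; bf.
Qed.

Lemma NW_coord n (r : 'I_n) q : q \in NW r -> fstL q <> r /\ sndL q = r.
Proof.
rewrite inE => /andP [nW /existsP [z /andP [zW adj]]].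
rewrite /W !inE in nW zW; rewrite -/(fstL q) in nW; rewrite -/(fstL z) in zW.
move: adj; rewrite Ladj_coord (eqP zW) [r == fstL q]eq_sym (negbTE nW) /= => /andP [_ /andP [/eqP <- _]].
by split => //; apply/eqP.
Qed.

Theorem lemma3p3 (n : nat) (hn : 5 <= n) (r : 'I_n) (S : {set Lvert n}) :
  S \subset NW r -> n - 2 <= #|S| -> resolving (@Ladj n) S.
Proof.
move=> sub card x y H.
have hS : forall q, q \in S -> fstL q <> r /\ sndL q = r.
  by move=> q qS; apply: NW_coord; exact: (subsetP sub).
set K := (@fstL n) @: S.
have inj : {in S &, injective (@fstL n)}.
  move=> q1 q2 h1 h2 E; apply/eqP; rewrite Lval_eq E eqxx /=.
  by case: (hS _ h1) => _ ->; case: (hS _ h2) => _ ->.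
have cK : #|K| = #|S| by rewrite card_in_imset.
have [/eqP nx _] := sndL_spec x; have [/eqP ny _] := sndL_spec y.
have [e1 e2] : fstL x = fstL y /\ sndL x = sndL y.
  apply: (@main_comb n r _ _ _ _ (fun k => k \in K)).
  - by apply/nesym.
  - by apply/nesym.
  - by move=> k /imsetP [q qS ->]; case: (hS _ qS).
  - move=> k /imsetP [q qS ->].
    have := H q qS; rewrite !distL // /gL.
    by case: (hS _ qS) => _ ->.
  - move=> u v ur vr uv.
    case: (boolP (u \in K)) => uK; first by left.
    case: (boolP (v \in K)) => vK; first by right.
    exfalso.
    have sb : K \subset [set~ r] :\ u :\ v.
      apply/subsetP => k kK; rewrite !in_setD1 in_setC1.
      apply/and3P; split.
      + by apply: contraNneq vK => <-.
      + by apply: contraNneq uK => <-.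
      + by move: kK => /imsetP [q qS ->]; apply/eqP; case: (hS _ qS).
    have := subset_leq_card sb.
    have := cardsD1 u [set~ r]; have := cardsD1 v ([set~ r] :\ u).
    rewrite !in_setD1 !in_setC1 cardsC1 card_ord.
    have -> : (v != u) = true by apply/eqP => E; apply: uv; rewrite E.
    have -> : (v != r) = true by apply/eqP.
    have -> : (u != r) = true by apply/eqP.
    lia.
  - move=> p1 p2.
    have : 0 < #|K :\ p1 :\ p2|.
      have := cardsD1 p1 K; have := cardsD1 p2 (K :\ p1).
      case: (p1 \in K); case: (p2 \in K :\ p1); lia.
    rewrite card_gt0 => /set0Pn [k]; rewrite !in_setD1 => /and3P [k2 k1 kK].
    by exists k => //; split; apply/eqP.
apply/eqP; rewrite Lval_eq e1 e2 !eqxx //.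
Qed.
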